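(* Let $\alpha=\frac14$, $\zeta=e^{-2\pi i\alpha}=-i$, $\mathcal A_3=\{-2,0,2\}$, and let $L_{-2},L_0,L_2$ be the operators on $\mathbb{C}^{\mathcal A_3}$ defined in the context. Let $\Gamma_3$ be the Zariski closure of the group generated by $L_{-2},L_0,L_2$, let $e$ span the kernel of $Q_{1/4}$, and let $H_{-2}=\mathrm{span}(e_0,e_2)$. Then for every $\mathbb{C}$-linear functional $v$ on $H_{-2}$, the linear map $T_v$ of $\mathbb{C}^{\mathcal A_3}$ defined by $T_v(e)=e$ and $T_v(h)=h+v(h)e$ for $h\in H_{-2}$ belongs to $\Gamma_3$.
   Context: $(e_q)_{q\in\mathcal A_3}$ is the canonical basis. For $p\in\mathcal A_3$, $L_p(e_q)=e_q-e_p$ if $q>p$, $L_p(e_q)=e_q-\zeta e_p$ if $q<p$, $L_p(e_p)=-\zeta e_p$. $Q_{1/4}$ is the hermitian form (linear in the first argument, conjugate-linear in the second) with $Q_{1/4}(e_p,e_p)=1$ and $Q_{1/4}(e_p,e_{p'})=(1+\zeta)^{-1}=\frac12(1+i)$ for $p>p'$; it is degenerate with a one-dimensional kernel spanned by a vector $e$ all of whose coordinates are nonzero, so $\mathbb{C}^{\mathcal A_3}=\mathbb{C}e\oplus H_{-2}$. In the paper's notation, the statement says that the kernel $K=\{v\in (H_{-2})^*: T_v\in\Gamma_3\}$ equals $(H_{-2})^*$. *)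

(* Defs.v *)
From HB Require Import structures.
From mathcomp Require Import all_boot all_order all_algebra.
From mathcomp Require Import reals.
From mathcomp Require Import complex.
From mathcomp Require mpoly.
Set Implicit Arguments. Unset Strict Implicit. Unset Printing Implicit Defensive.
Import Order.TTheory GRing.Theory Num.Theory.
Local Open Scope ring_scope.
Local Open Scope complex_scope.

Section Defs.
Variable R : realType.
Notation C := (R[i]).

(* Index set A_3 = {-2, 0, 2} encoded by 'I_3 via 0 |-> -2, 1 |-> 0, 2 |-> 2
   (order preserving). *)

Definition zeta : C := - 'i.

(* Matrix of L_p: column j is the coordinate vector of L_p(e_j).
   L_p e_q = e_q - e_p (q>p), e_q - zeta e_p (q<p), L_p e_p = - zeta e_p. *)
Definition Lop (p : 'I_3) : 'M[C]_3 :=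
  \matrix_(r < 3, c < 3) (((r == c) && (c != p))%:R
                 - (r == p)%:R * (if (p < c)%N then 1 else zeta)).

Inductive in_gen_group : 'M[C]_3 -> Prop :=
| gen_one : in_gen_group 1%:M
| gen_mul : forall p g, in_gen_group g -> in_gen_group (Lop p *m g)
| gen_mulV : forall p g, in_gen_group g -> in_gen_group (invmx (Lop p) *m g).

Definition mx_eval (P : mpoly.mpoly 9 C) (g : 'M[C]_3) : C :=
  mpoly.meval (fun k : 'I_9 => mxvec g 0 k) P.

Definition zariski_closure (S : 'M[C]_3 -> Prop) : 'M[C]_3 -> Prop :=
  fun g => g \in unitmx /\
    forall P : mpoly.mpoly 9 C, (forall s, S s -> mx_eval P s = 0) -> mx_eval P g = 0.

Definition Gamma3 : 'M[C]_3 -> Prop := zariski_closure in_gen_group.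

(* Gram matrix of Q_{1/4}: Q(e_p,e_p) = 1, Q(e_p,e_p') = (1+zeta)^-1 for p > p',
   hence conj((1+zeta)^-1) for p < p' (hermitian). *)
Definition Qgram (p q : 'I_3) : C :=
  if p == q then 1 else if (q < p)%N then (1 + zeta)^-1 else ((1 + zeta)^-1)^*.

Definition Q14 (x y : 'cV[C]_3) : C :=
  \sum_(p < 3) \sum_(q < 3) x p 0 * (y q 0)^* * Qgram p q.

Definition in_kerQ (x : 'cV[C]_3) : Prop := forall y, Q14 x y = 0.

(* H_{-2} = span(e_0, e_2): vectors whose e_{-2}-coordinate (index 0) vanishes. *)
Definition in_Hm2 (h : 'cV[C]_3) : Prop := h ord0 0 = 0.

(* A C-linear functional v on H_{-2} = span(e_0, e_2), given by its values
   a = v(e_0), b = v(e_2): v(h) = a h_0 + b h_2 (coordinates at indices 1, 2). *)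
Definition Hm2_functional (a b : C) (h : 'cV[C]_3) : C :=
  a * h (inord 1) 0 + b * h (inord 2) 0.

End Defs.

(* Main.v *)
Require Import Defs.
From HB Require Import structures.
From mathcomp Require Import all_boot all_order all_algebra.
From mathcomp Require Import reals.
From mathcomp Require Import complex.
From mathcomp Require mpoly.
From mathcomp Require Import ring lra.
Set Implicit Arguments. Unset Strict Implicit. Unset Printing Implicit Defensive.
Import Order.TTheory GRing.Theory Num.Theory.
Local Open Scope ring_scope.
Local Open Scope complex_scope.


Section Poly.
Variable R : realType.
Notation C := (R[i]).

Lemma meval_line (P : mpoly.mpoly 9 C) (a b : 'I_9 -> C) :
  exists q : {poly C}, forall x : C, q.[x] = mpoly.meval (fun k => a k + x * b k) P.
Proof.
exists (\sum_(m <- mpoly.msupp P) (mpoly.mcoeff m P)%:P *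
   \prod_(i < 9) ((a i)%:P + (b i)%:P * 'X) ^+ (mpoly.fun_of_multinom m i)).
move=> x; rewrite mpoly.mevalE horner_sum; apply: eq_bigr => m _.
rewrite hornerM hornerC horner_prod; congr (_ * _); apply: eq_bigr => i _.
by rewrite !hornerE (mulrC x).
Qed.

Lemma poly_nat_roots (q : {poly C}) : (forall n : nat, q.[n%:R] = 0) -> q = 0.
Proof.
move=> H; apply: (@roots_geq_poly_eq0 _ q [seq (k%:R : C) | k <- iota 0 (size q)]).
- by apply/allP => z /mapP [k _ ->]; rewrite /root H.
- rewrite map_inj_uniq ?iota_uniq // => m k /eqP; rewrite eqr_nat => /eqP //.
- by rewrite size_map size_iota.
Qed.

Lemma meval_line_ext (P : mpoly.mpoly 9 C) (a b : 'I_9 -> C) :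
  (forall n : nat, mpoly.meval (fun k => a k + n%:R * b k) P = 0) ->
  forall x : C, mpoly.meval (fun k => a k + x * b k) P = 0.
Proof.
have [q Hq] := meval_line P a b.
move=> H x; rewrite -Hq; suff -> : q = 0 by rewrite horner0.
by apply: poly_nat_roots => n; rewrite Hq H.
Qed.
End Poly.


Section S.
Variable R : realType.
Notation C := (R[i]).
Definition mk3 (a00 a01 a02 a10 a11 a12 a20 a21 a22 : C) : 'M[C]_3 :=
  \matrix_(i < 3, j < 3) nth 0 (nth [::] [:: [:: a00; a01; a02]; [:: a10; a11; a12]; [:: a20; a21; a22]] i) j.

Local Notation Re := complex.Re.
Local Notation Im := complex.Im.
Lemma ReD (x y : C) : Re (x + y) = Re x + Re y. Proof. by case: x => ? ?; case: y => ? ?. Qed.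
Lemma ImD (x y : C) : Im (x + y) = Im x + Im y. Proof. by case: x => ? ?; case: y => ? ?. Qed.
Lemma ReN (x : C) : Re (- x) = - Re x. Proof. by case: x. Qed.
Lemma ImN (x : C) : Im (- x) = - Im x. Proof. by case: x. Qed.
Lemma ReM (x y : C) : Re (x * y) = Re x * Re y - Im x * Im y. Proof. by case: x => ? ?; case: y => ? ?. Qed.
Lemma ImM (x y : C) : Im (x * y) = Re x * Im y + Im x * Re y. Proof. by case: x => ? ?; case: y => ? ? /=; rewrite addrC. Qed.
Lemma Re0 : Re (0 : C) = 0. Proof. by []. Qed.
Lemma Im0 : Im (0 : C) = 0. Proof. by []. Qed.
Lemma Re1 : Re (1 : C) = 1. Proof. by []. Qed.
Lemma Im1 : Im (1 : C) = 0. Proof. by []. Qed.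
Lemma cplx_eq (x y : C) : Re x = Re y -> Im x = Im y -> x = y.
Proof. by case: x => ? ?; case: y => ? ? /= -> ->. Qed.

Definition jc : C := locked ('i).
Lemma Rej : Re jc = 0. Proof. by rewrite /jc -lock. Qed.
Lemma Imj : Im jc = 1. Proof. by rewrite /jc -lock. Qed.
Lemma zetaE : zeta R = - jc. Proof. by rewrite /jc -lock. Qed.
Lemma ReMn (x : C) n : Re (x *+ n) = Re x *+ n.
Proof. by elim: n => [|n IH] //; rewrite !mulrS ReD IH. Qed.
Lemma ImMn (x : C) n : Im (x *+ n) = Im x *+ n.
Proof. by elim: n => [|n IH] //; rewrite !mulrS ImD IH. Qed.

Lemma jc2 : jc * jc = -1.
Proof. by apply: cplx_eq; rewrite ?ReM ?ImM Rej Imj /=; ring. Qed.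

Lemma jc_eq (f g : C -> C) :
  (forall x, 2 * (f x - g x) = (f 1 - g 1 + (f (-1) - g (-1)) - 2 * (f 0 - g 0)) * (x * x + 1)) ->
  f jc = g jc.
Proof.
move=> H; have := H jc; rewrite jc2 addNr mulr0 => /eqP.
by rewrite mulf_eq0 pnatr_eq0 /= subr_eq0 => /eqP.
Qed.

Ltac cp := rewrite ?zetaE;
  match goal with |- ?L = ?Rr =>
    let F := eval pattern jc in L in
    let G := eval pattern jc in Rr in
    match F with ?F' jc => match G with ?G' jc =>
      apply: (@jc_eq F' G'); let x := fresh "x" in move=> x /=; ring end end end.

Ltac mxcomp := apply/matrixP => -[[|[|[|//]]] Hr] -[[|[|[|//]]] Hc];
  rewrite !mxE ?big_ord_recr ?big_ord0 /= ?mxE /=; cp.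

Lemma w1_s0 : Lop R 0 *m 1%:M = (mk3 (1 * jc) (-1) (-1) 0 1 0 0 0 1).
Proof. mxcomp. Qed.
Lemma w1_g0 : in_gen_group (mk3 (1 * jc) (-1) (-1) 0 1 0 0 0 1).
Proof. rewrite -w1_s0; apply: gen_mul; exact: gen_one. Qed.
Lemma w1_s1 : Lop R 0 *m (mk3 (1 * jc) (-1) (-1) 0 1 0 0 0 1) = (mk3 (-1) ((-1) + (-1) * jc) ((-1) + (-1) * jc) 0 1 0 0 0 1).
Proof. mxcomp. Qed.
Lemma w1_g1 : in_gen_group (mk3 (-1) ((-1) + (-1) * jc) ((-1) + (-1) * jc) 0 1 0 0 0 1).
Proof. rewrite -w1_s1; apply: gen_mul; exact: w1_g0. Qed.
Lemma w1_s2 : Lop R 2 *m (mk3 (-1) ((-1) + (-1) * jc) ((-1) + (-1) * jc) 0 1 0 0 0 1) = (mk3 (-1) ((-1) + (-1) * jc) ((-1) + (-1) * jc) 0 1 0 ((-1) * jc) 1 1).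
Proof. mxcomp. Qed.
Lemma w1_g2 : in_gen_group (mk3 (-1) ((-1) + (-1) * jc) ((-1) + (-1) * jc) 0 1 0 ((-1) * jc) 1 1).
Proof. rewrite -w1_s2; apply: gen_mul; exact: w1_g1. Qed.
Lemma w1_s3 : Lop R 0 *m (mk3 (-1) ((-1) + (-1) * jc) ((-1) + (-1) * jc) 0 1 0 ((-1) * jc) 1 1) = (mk3 0 ((-1) + (-1) * jc) ((-1) * jc) 0 1 0 ((-1) * jc) 1 1).
Proof. mxcomp. Qed.
Lemma w1_g3 : in_gen_group (mk3 0 ((-1) + (-1) * jc) ((-1) * jc) 0 1 0 ((-1) * jc) 1 1).
Proof. rewrite -w1_s3; apply: gen_mul; exact: w1_g2. Qed.
Lemma w1_s4 : Lop R 1 *m (mk3 0 ((-1) + (-1) * jc) ((-1) * jc) 0 1 0 ((-1) * jc) 1 1) = (mk3 0 ((-1) + (-1) * jc) ((-1) * jc) (1 * jc) 0 0 ((-1) * jc) 1 1).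
Proof. mxcomp. Qed.
Lemma w1_g4 : in_gen_group (mk3 0 ((-1) + (-1) * jc) ((-1) * jc) (1 * jc) 0 0 ((-1) * jc) 1 1).
Proof. rewrite -w1_s4; apply: gen_mul; exact: w1_g3. Qed.
Lemma w1_s5 : Lop R 1 *m (mk3 0 ((-1) + (-1) * jc) ((-1) * jc) (1 * jc) 0 0 ((-1) * jc) 1 1) = (mk3 0 ((-1) + (-1) * jc) ((-1) * jc) ((-1) + 1 * jc) ((-1) * jc) 0 ((-1) * jc) 1 1).
Proof. mxcomp. Qed.
Lemma w1_g5 : in_gen_group (mk3 0 ((-1) + (-1) * jc) ((-1) * jc) ((-1) + 1 * jc) ((-1) * jc) 0 ((-1) * jc) 1 1).
Proof. rewrite -w1_s5; apply: gen_mul; exact: w1_g4. Qed.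
Lemma w1_s6 : Lop R 1 *m (mk3 0 ((-1) + (-1) * jc) ((-1) * jc) ((-1) + 1 * jc) ((-1) * jc) 0 ((-1) * jc) 1 1) = (mk3 0 ((-1) + (-1) * jc) ((-1) * jc) (-1) (1 + (-1) * jc) 0 ((-1) * jc) 1 1).
Proof. mxcomp. Qed.
Lemma w1_g6 : in_gen_group (mk3 0 ((-1) + (-1) * jc) ((-1) * jc) (-1) (1 + (-1) * jc) 0 ((-1) * jc) 1 1).
Proof. rewrite -w1_s6; apply: gen_mul; exact: w1_g5. Qed.
Lemma w1_s7 : Lop R 0 *m (mk3 0 ((-1) + (-1) * jc) ((-1) * jc) (-1) (1 + (-1) * jc) 0 ((-1) * jc) 1 1) = (mk3 (1 + 1 * jc) (-1) 0 (-1) (1 + (-1) * jc) 0 ((-1) * jc) 1 1).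
Proof. mxcomp. Qed.
Lemma w1_g7 : in_gen_group (mk3 (1 + 1 * jc) (-1) 0 (-1) (1 + (-1) * jc) 0 ((-1) * jc) 1 1).
Proof. rewrite -w1_s7; apply: gen_mul; exact: w1_g6. Qed.
Lemma w1_in : in_gen_group (mk3 (1 + 1 * jc) (-1) 0 (-1) (1 + (-1) * jc) 0 ((-1) * jc) 1 1).
Proof. exact: w1_g7. Qed.
Lemma w2_s0 : Lop R 0 *m 1%:M = (mk3 (1 * jc) (-1) (-1) 0 1 0 0 0 1).
Proof. mxcomp. Qed.
Lemma w2_g0 : in_gen_group (mk3 (1 * jc) (-1) (-1) 0 1 0 0 0 1).
Proof. rewrite -w2_s0; apply: gen_mul; exact: gen_one. Qed.
Lemma w2_s1 : Lop R 2 *m (mk3 (1 * jc) (-1) (-1) 0 1 0 0 0 1) = (mk3 (1 * jc) (-1) (-1) 0 1 0 (-1) 0 0).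
Proof. mxcomp. Qed.
Lemma w2_g1 : in_gen_group (mk3 (1 * jc) (-1) (-1) 0 1 0 (-1) 0 0).
Proof. rewrite -w2_s1; apply: gen_mul; exact: w2_g0. Qed.
Lemma w2_s2 : Lop R 0 *m (mk3 (1 * jc) (-1) (-1) 0 1 0 (-1) 0 0) = (mk3 0 ((-1) + (-1) * jc) ((-1) * jc) 0 1 0 (-1) 0 0).
Proof. mxcomp. Qed.
Lemma w2_g2 : in_gen_group (mk3 0 ((-1) + (-1) * jc) ((-1) * jc) 0 1 0 (-1) 0 0).
Proof. rewrite -w2_s2; apply: gen_mul; exact: w2_g1. Qed.
Lemma w2_s3 : Lop R 1 *m (mk3 0 ((-1) + (-1) * jc) ((-1) * jc) 0 1 0 (-1) 0 0) = (mk3 0 ((-1) + (-1) * jc) ((-1) * jc) 1 1 1 (-1) 0 0).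
Proof. mxcomp. Qed.
Lemma w2_g3 : in_gen_group (mk3 0 ((-1) + (-1) * jc) ((-1) * jc) 1 1 1 (-1) 0 0).
Proof. rewrite -w2_s3; apply: gen_mul; exact: w2_g2. Qed.
Lemma w2_s4 : Lop R 1 *m (mk3 0 ((-1) + (-1) * jc) ((-1) * jc) 1 1 1 (-1) 0 0) = (mk3 0 ((-1) + (-1) * jc) ((-1) * jc) (1 + 1 * jc) 1 (1 + 1 * jc) (-1) 0 0).
Proof. mxcomp. Qed.
Lemma w2_g4 : in_gen_group (mk3 0 ((-1) + (-1) * jc) ((-1) * jc) (1 + 1 * jc) 1 (1 + 1 * jc) (-1) 0 0).
Proof. rewrite -w2_s4; apply: gen_mul; exact: w2_g3. Qed.
Lemma w2_s5 : Lop R 1 *m (mk3 0 ((-1) + (-1) * jc) ((-1) * jc) (1 + 1 * jc) 1 (1 + 1 * jc) (-1) 0 0) = (mk3 0 ((-1) + (-1) * jc) ((-1) * jc) (1 * jc) 1 (1 * jc) (-1) 0 0).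
Proof. mxcomp. Qed.
Lemma w2_g5 : in_gen_group (mk3 0 ((-1) + (-1) * jc) ((-1) * jc) (1 * jc) 1 (1 * jc) (-1) 0 0).
Proof. rewrite -w2_s5; apply: gen_mul; exact: w2_g4. Qed.
Lemma w2_s6 : Lop R 0 *m (mk3 0 ((-1) + (-1) * jc) ((-1) * jc) (1 * jc) 1 (1 * jc) (-1) 0 0) = (mk3 (1 + (-1) * jc) ((-1) * jc) (1 + (-1) * jc) (1 * jc) 1 (1 * jc) (-1) 0 0).
Proof. mxcomp. Qed.
Lemma w2_g6 : in_gen_group (mk3 (1 + (-1) * jc) ((-1) * jc) (1 + (-1) * jc) (1 * jc) 1 (1 * jc) (-1) 0 0).
Proof. rewrite -w2_s6; apply: gen_mul; exact: w2_g5. Qed.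
Lemma w2_s7 : Lop R 0 *m (mk3 (1 + (-1) * jc) ((-1) * jc) (1 + (-1) * jc) (1 * jc) 1 (1 * jc) (-1) 0 0) = (mk3 2 0 1 (1 * jc) 1 (1 * jc) (-1) 0 0).
Proof. mxcomp. Qed.
Lemma w2_g7 : in_gen_group (mk3 2 0 1 (1 * jc) 1 (1 * jc) (-1) 0 0).
Proof. rewrite -w2_s7; apply: gen_mul; exact: w2_g6. Qed.
Lemma w2_in : in_gen_group (mk3 2 0 1 (1 * jc) 1 (1 * jc) (-1) 0 0).
Proof. exact: w2_g7. Qed.
Definition N1 := (mk3 (1 * jc) (-1) 0 (-1) ((-1) * jc) 0 ((-1) * jc) 1 0).
Definition N2 := (mk3 1 0 1 (1 * jc) 0 (1 * jc) (-1) 0 (-1)).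
Lemma w1_final : (mk3 (1 + 1 * jc) (-1) 0 (-1) (1 + (-1) * jc) 0 ((-1) * jc) 1 1) = 1%:M + N1.
Proof. rewrite /N1; mxcomp. Qed.
Lemma w2_final : (mk3 2 0 1 (1 * jc) 1 (1 * jc) (-1) 0 0) = 1%:M + N2.
Proof. rewrite /N2; mxcomp. Qed.
End S.



Section S2.
Variable R : realType.
Notation C := (R[i]).

Lemma gen_mulmx (g h : 'M[C]_3) : in_gen_group g -> in_gen_group h -> in_gen_group (g *m h).
Proof.
elim => [|p g' _ IH|p g' _ IH] Hh; first by rewrite mul1mx.
- by rewrite -mulmxA; apply: gen_mul; exact: IH.
- by rewrite -mulmxA; apply: gen_mulV; exact: IH.
Qed.

Ltac cp := rewrite ?(zetaE R);
  match goal with |- ?L = ?Rr =>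
    let F := eval pattern (jc R) in L in
    let G := eval pattern (jc R) in Rr in
    match F with ?F' (jc R) => match G with ?G' (jc R) =>
      apply: (@jc_eq R F' G'); let x := fresh "x" in move=> x /=; ring end end end.

Ltac mxcomp := apply/matrixP => -[[|[|[|//]]] Hr] -[[|[|[|//]]] Hc];
  rewrite !mxE ?big_ord_recr ?big_ord0 /= ?mxE /=; cp.


Definition Gst (s t : C) : 'M[C]_3 := 1%:M + s *: N1 R + t *: N2 R.

Lemma N11 : N1 R *m N1 R = 0. Proof. rewrite /N1; mxcomp. Qed.
Lemma N12 : N1 R *m N2 R = 0. Proof. rewrite /N1 /N2; mxcomp. Qed.
Lemma N21 : N2 R *m N1 R = 0. Proof. rewrite /N1 /N2; mxcomp. Qed.
Lemma N22 : N2 R *m N2 R = 0. Proof. rewrite /N2; mxcomp. Qed.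

Lemma G_mul s t s' t' : Gst s t *m Gst s' t' = Gst (s + s') (t + t').
Proof.
rewrite /Gst !mulmxDl !mulmxDr !mul1mx !mulmx1 -!scalemxAl -!scalemxAr N11 N12 N21 N22 !scaler0 !addr0.
by apply/matrixP => i j; rewrite !mxE; ring.
Qed.

Lemma G00 : Gst 0 0 = 1%:M.
Proof. by rewrite /Gst !scale0r !addr0. Qed.

Lemma G10 : Gst 1 0 = 1%:M + N1 R.
Proof. by rewrite /Gst scale1r scale0r addr0. Qed.

Lemma G01 : Gst 0 1 = 1%:M + N2 R.
Proof. by rewrite /Gst scale1r scale0r addr0. Qed.

Lemma Gnat (n m : nat) : in_gen_group (Gst n%:R m%:R).
Proof.
elim: n => [|n IH].
  elim: m => [|m IH]; first by rewrite G00; exact: gen_one.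
  have -> : Gst 0 m.+1%:R = Gst 0 1 *m Gst 0 m%:R by rewrite G_mul addr0 -natr1 addrC.
  apply: gen_mulmx => //; rewrite G01 -w2_final; exact: w2_in.
have -> : Gst n.+1%:R m%:R = Gst 1 0 *m Gst n%:R m%:R by rewrite G_mul add0r -natr1 addrC.
apply: gen_mulmx => //; rewrite G10 -w1_final; exact: w1_in.
Qed.

Lemma G_unit s t : Gst s t \in unitmx.
Proof. have H := G_mul s t (-s) (-t); rewrite !subrr G00 in H. by have [] := mulmx1_unit H. Qed.

Lemma mxvecG s t k : mxvec (Gst s t) 0 k = mxvec (1%:M : 'M[C]_3) 0 k + s * mxvec (N1 R) 0 k + t * mxvec (N2 R) 0 k.
Proof. by rewrite /Gst !linearD !linearZ /= !mxE. Qed.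

Lemma zar (P : mpoly.mpoly 9 C) : (forall g, in_gen_group g -> mx_eval P g = 0) ->
  forall s t, mx_eval P (Gst s t) = 0.
Proof.
move=> HP.
have A : forall (n : nat) (t : C), mx_eval P (Gst n%:R t) = 0.
  move=> n; have := @meval_line_ext R P (fun k => mxvec (1%:M : 'M[C]_3) 0 k + n%:R * mxvec (N1 R) 0 k)
     (fun k => mxvec (N2 R) 0 k).
  move=> H t; rewrite /mx_eval (mpoly.meval_eq _ (fun k => mxvecG _ _ k)); apply: H => m.
  by rewrite -(HP _ (Gnat n m)) /mx_eval (mpoly.meval_eq _ (fun k => mxvecG _ _ k)).
move=> s t.
have := @meval_line_ext R P (fun k => mxvec (1%:M : 'M[C]_3) 0 k + t * mxvec (N2 R) 0 k)
     (fun k => mxvec (N1 R) 0 k).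
move=> H; rewrite /mx_eval (mpoly.meval_eq _ (fun k => mxvecG _ _ k)).
rewrite (mpoly.meval_eq (v2 := fun k => mxvec (1%:M : 'M[C]_3) 0 k + t * mxvec (N2 R) 0 k + s * mxvec (N1 R) 0 k)); last by move=> k; rewrite /= -addrA (addrC (s * _)) addrA.
apply: H => n.
rewrite -(A n t) /mx_eval (mpoly.meval_eq _ (fun k => mxvecG _ _ k)).
by apply: mpoly.meval_eq => k /=; rewrite -addrA (addrC (t * _)) addrA.
Qed.

End S2.


Section S3.
Variable R : realType.
Notation C := (R[i]).
Local Notation J := (jc R).

Lemma two_nz : (2 : C) != 0. Proof. by rewrite pnatr_eq0. Qed.

Ltac cp := rewrite ?(zetaE R);
  match goal with |- ?L = ?Rr =>
    let F := eval pattern (jc R) in L in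
    let G := eval pattern (jc R) in Rr in
    match F with ?F' (jc R) => match G with ?G' (jc R) =>
      apply: (@jc_eq R F' G'); let x := fresh "x" in move=> x /=; ring end end end.

Ltac mxcomp := apply/matrixP => -[[|[|[|//]]] Hr] -[[|[|[|//]]] Hc];
  rewrite !mxE ?big_ord_recr ?big_ord0 /= ?mxE /=; cp.


Lemma E2 : (1 - J) * (1 + J) = 2. Proof. cp. Qed.

Lemma nz1 : (1 - J) != 0.
Proof. by apply/negP => /eqP H; move: E2; rewrite H mul0r => /eqP; rewrite eq_sym (negPf two_nz). Qed.

Lemma cE : (1 + zeta R)^-1 = (1 + J) / 2.
Proof.
rewrite zetaE; apply: (mulfI nz1); rewrite divff ?nz1 // mulrA E2 divff //; exact: two_nz.
Qed.

Lemma conj_jc : J^* = - J.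
Proof. rewrite /jc -lock; apply: cplx_eq => /=; by rewrite ?oppr0. Qed.

Lemma cE' : ((1 + zeta R)^-1)^* = (1 - J) / 2.
Proof.
rewrite conjc_inv.
have -> : (1 + zeta R)^* = 1 + J.
  by rewrite /zeta /jc -lock; apply: cplx_eq => /=; ring.
have nz2 : (1 + J) != 0.
  by apply/negP => /eqP H; move: E2; rewrite H mulr0 => /eqP; rewrite eq_sym (negPf two_nz).
apply: (mulfI nz2); rewrite divff // mulrA (mulrC (1 + J) (1 - J)) E2 divff //; exact: two_nz.
Qed.

Definition o0 : 'I_3 := @Ordinal 3 0 isT.
Definition o1 : 'I_3 := @Ordinal 3 1 isT.
Definition o2 : 'I_3 := @Ordinal 3 2 isT.

Lemma sum3 (f : 'I_3 -> C) : \sum_(i < 3) f i = f o0 + f o1 + f o2.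
Proof. by rewrite !big_ord_recr big_ord0 /= add0r; congr (_ + _ + _); congr f; apply: val_inj. Qed.

Lemma inord1 : (inord 1 : 'I_3) = o1. Proof. by apply: val_inj; rewrite /= inordK. Qed.
Lemma inord2 : (inord 2 : 'I_3) = o2. Proof. by apply: val_inj; rewrite /= inordK. Qed.
Lemma ord0E : (ord0 : 'I_3) = o0. Proof. by apply: val_inj. Qed.

Lemma Qeq (p : 'I_3) : Qgram R p p = 1. Proof. by rewrite /Qgram eqxx. Qed.
Lemma Qlt (p q : 'I_3) : (q < p)%N -> Qgram R p q = (1 + J) / 2.
Proof.
move=> H; have Hn : p != q by apply: contraTneq H => ->; rewrite ltnn.
by rewrite /Qgram (negPf Hn) H cE.
Qed.
Lemma Qgt (p q : 'I_3) : (p < q)%N -> Qgram R p q = (1 - J) / 2.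
Proof.
move=> H; have Hn : p != q by apply: contraTneq H => ->; rewrite ltnn.
by rewrite /Qgram (negPf Hn) ltnNge (ltnW H) cE'.
Qed.

Ltac cpf := rewrite ?(zetaE R);
  match goal with |- ?L = ?Rr =>
    let F := eval pattern (jc R) in L in
    let G := eval pattern (jc R) in Rr in
    match F with ?F' (jc R) => match G with ?G' (jc R) =>
      apply: (@jc_eq R F' G'); let x := fresh "x" in move=> x /=; field end end end.

Lemma cj1 : (1 : C)^* = 1. Proof. exact: conjc1. Qed.
Lemma cj0 : (0 : C)^* = 0. Proof. exact: conjc0. Qed.

Lemma kerE (e : 'cV[C]_3) : in_kerQ e -> e o1 0 = J * e o0 0 /\ e o2 0 = - e o0 0.
Proof.
move=> H.
have QE : forall p q : 'I_3, Qgram R p q = if p == q then 1 else if (q < p)%N then (1 + J) / 2 else (1 - J) / 2.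
  by move=> p q; rewrite /Qgram; case: (p == q) => //; case: (q < p)%N; [exact: cE | exact: cE'].
have E0 := H (delta_mx o0 0); have E1 := H (delta_mx o1 0); have E2 := H (delta_mx o2 0).
move: E0 E1 E2; rewrite /Q14 !sum3 !mxE !QE /=. rewrite !conjC_nat ?mulr1n ?mulr0n !mulr1 !mulr0 !mul0r !addr0 !add0r.
set x0 := e o0 0; set x1 := e o1 0; set x2 := e o2 0.
move=> E0 E1 E2.
have K1 : x1 - J * x0 = (-1 - J) * (x0 + x1 * ((1 + J) / 2) + x2 * ((1 + J) / 2))
   + (1 + J) * (x0 * ((1 - J) / 2) + x1 + x2 * ((1 + J) / 2)) by cpf.
have K2 : x2 - - x0 = 2 * (x0 + x1 * ((1 + J) / 2) + x2 * ((1 + J) / 2))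
   + (-1 - J) * (x0 * ((1 - J) / 2) + x1 + x2 * ((1 + J) / 2)) by cpf.
rewrite E0 E1 !mulr0 addr0 in K1 K2.
by split; apply/eqP; rewrite -subr_eq0 ?K1 ?K2.
Qed.
End S3.


Ltac cpj := match goal with |- context [jc ?R] =>
  match goal with |- ?L = ?Rr =>
    let F := eval pattern (jc R) in L in
    let G := eval pattern (jc R) in Rr in
    match F with ?F' (jc R) => match G with ?G' (jc R) =>
      apply: (@jc_eq R F' G'); let x := fresh "x" in move=> x /=; ring end end end end.
Ltac cp := first [cpj | ring].

Lemma ord3_ind (P : 'I_3 -> Prop) : P o0 -> P o1 -> P o2 -> forall r, P r.
Proof.
move=> H0 H1 H2 [[|[|[|//]]] Hr].
- by have -> : Ordinal Hr = o0 by apply: val_inj.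
- by have -> : Ordinal Hr = o1 by apply: val_inj.
- by have -> : Ordinal Hr = o2 by apply: val_inj.
Qed.

Lemma mulmx_delta (R : realType) (T : 'M[R[i]]_3) (j r : 'I_3) : (T *m delta_mx j (0 : 'I_1)) r 0 = T r j.
Proof.
rewrite mxE (bigD1 j) //= mxE !eqxx mulr1 big1 ?addr0 // => k Hk.
by rewrite mxE (negPf Hk) mulr0.
Qed.

Unset Implicit Arguments.
Set Strict Implicit.
Theorem mainTheorem16 (R : realType) (e : 'cV[R[i]]_3) (a b : R[i]) (T : 'M[R[i]]_3) :
  e != 0 -> in_kerQ e ->
  T *m e = e ->
  (forall h : 'cV[R[i]]_3, in_Hm2 h -> T *m h = h + Hm2_functional a b h *: e) ->
  Gamma3 T.
Proof.
move=> enz eK Te TH.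
have [Ek1 Ek2] := kerE eK.
have x0nz : e o0 0 != 0.
  apply: contraNneq enz => H0; apply/eqP/matrixP => r c; rewrite mxE ord1.
  by move: r; apply: ord3_ind => //; rewrite ?Ek1 ?Ek2 H0 ?mulr0 ?oppr0.
have Hd1 : in_Hm2 (delta_mx o1 (0 : 'I_1) : 'cV[R[i]]_3) by rewrite /in_Hm2 !mxE.
have Hd2 : in_Hm2 (delta_mx o2 (0 : 'I_1) : 'cV[R[i]]_3) by rewrite /in_Hm2 !mxE.
have HT1 : forall r, T r o1 = (r == o1)%:R + a * e r 0.
  move=> r; have := congr1 (fun M : 'cV[R[i]]_3 => M r 0) (TH _ Hd1).
  rewrite mulmx_delta !mxE /Hm2_functional inord1 inord2 !mxE /= => ->.
  by rewrite andbT mulr1n mulr0n mulr1 mulr0 addr0.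
have HT2 : forall r, T r o2 = (r == o2)%:R + b * e r 0.
  move=> r; have := congr1 (fun M : 'cV[R[i]]_3 => M r 0) (TH _ Hd2).
  rewrite mulmx_delta !mxE /Hm2_functional inord1 inord2 !mxE /= => ->.
  by rewrite andbT mulr1n mulr0n mulr1 mulr0 add0r.
have He : forall r, T r o0 * e o0 0 = e r 0 - T r o1 * e o1 0 - T r o2 * e o2 0.
  move=> r; have := congr1 (fun M : 'cV[R[i]]_3 => M r 0) Te; rewrite mxE sum3 => <-.
  ring.
have -> : T = Gst (- (e o0 0 * a)) (e o0 0 * b).
  apply/matrixP => r c; move: c r; apply: ord3_ind; apply: ord3_ind.
  all: rewrite /Gst /N1 /N2.
  1-3: by apply: (mulIf x0nz); rewrite He HT1 HT2 !mxE /= ?Ek1 ?Ek2; cp.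
  1-6: by rewrite ?HT1 ?HT2 !mxE /= ?Ek1 ?Ek2; cp.
split; first exact: G_unit.
move=> P HP; exact: zar.
Qed.
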